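(* Let $(R,+,\cdot)$ be a finite simple semiring with $|RR|>1$ and $|R|>2$, and let $(M,+)$ be an $R$-semimodule that is faithful of smallest cardinality. Then $(M,+)$ is irreducible.
   Context: A semiring is a nonempty set with a commutative semigroup operation $+$ and a semigroup operation $\cdot$ satisfying both distributive laws; simple if its only congruences are the identity and the full relation. $RR=\{rs: r,s\in R\}$. An $R$-semimodule is a commutative semigroup $(M,+)$ with an action $R\times M\to M$ satisfying $r(sx)=(rs)x$, $(r+s)x=rx+sx$, $r(x+y)=rx+ry$. It is faithful if the map $r\mapsto(x\mapsto rx)$ from $R$ to the endomorphisms of $(M,+)$ is injective; faithful of smallest cardinality if it is faithful and no $R$-semimodule $N$ with $|N|<|M|$ is faithful. A subsemimodule is a subsemigroup closed under the action; a semimodule congruence is an equivalence compatible with $+$ and the action. $M$ is quasitrivial if $rx=sx$ for all $r,s\in R$, $x\in M$; id-quasitrivial if $rx=x$ for all $r,x$. $M$ is sub-irreducible if it is not quasitrivial and all its proper subsemimodules are id-quasitrivial; quotient-irreducible if not quasitrivial and its only congruences are the identity and $M\times M$; irreducible if both. *)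

(* Defs.v *)
From mathcomp Require Import all_boot.
Set Implicit Arguments. Unset Strict Implicit. Unset Printing Implicit Defensive.

Definition is_semiring (R : Type) (add mul : R -> R -> R) : Prop :=
  [/\ forall a b c, add a (add b c) = add (add a b) c,
      forall a b, add a b = add b a,
      forall a b c, mul a (mul b c) = mul (mul a b) c,
      forall a b c, mul a (add b c) = add (mul a b) (mul a c)
    & forall a b c, mul (add a b) c = add (mul a c) (mul b c)].

Definition is_equivalence (T : Type) (rel : T -> T -> Prop) : Prop :=
  [/\ forall x, rel x x, forall x y, rel x y -> rel y x
    & forall x y z, rel x y -> rel y z -> rel x z].

Definition semiring_congruence (R : Type) (add mul : R -> R -> R)
    (rel : R -> R -> Prop) : Prop :=
  is_equivalence rel /\
  (forall a b c d, rel a b -> rel c d -> rel (add a c) (add b d) /\ rel (mul a c) (mul b d)).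

Definition simple_semiring (R : Type) (add mul : R -> R -> R) : Prop :=
  forall rel, semiring_congruence add mul rel ->
    (forall x y, rel x y <-> x = y) \/ (forall x y, rel x y).

(* |RR| > 1 : RR = {rs} has two distinct elements *)
Definition RR_nontrivial (R : Type) (mul : R -> R -> R) : Prop :=
  exists a b c d, mul a b <> mul c d.

Definition is_semimodule (R M : Type) (add mul : R -> R -> R)
    (addM : M -> M -> M) (act : R -> M -> M) : Prop :=
  [/\ forall x y z, addM x (addM y z) = addM (addM x y) z,
      forall x y, addM x y = addM y x,
      forall r s x, act r (act s x) = act (mul r s) x,
      forall r s x, act (add r s) x = addM (act r x) (act s x)
    & forall r x y, act r (addM x y) = addM (act r x) (act r y)].

Definition faithful (R M : Type) (act : R -> M -> M) : Prop :=
  forall r s, (forall x, act r x = act s x) -> r = s.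

(* faithful of smallest cardinality (among finite semimodules; any N with
   |N| < |M| for finite M is finite) *)
Definition faithful_smallest (R : Type) (add mul : R -> R -> R)
    (M : finType) (addM : M -> M -> M) (act : R -> M -> M) : Prop :=
  faithful act /\
  forall (N : finType) (addN : N -> N -> N) (actN : R -> N -> N),
    is_semimodule add mul addN actN -> faithful actN -> #|M| <= #|N|.

Definition quasitrivial (R M : Type) (act : R -> M -> M) : Prop :=
  forall r s x, act r x = act s x.

Definition subsemimodule (R M : Type) (addM : M -> M -> M) (act : R -> M -> M)
    (S : M -> Prop) : Prop :=
  [/\ exists x, S x,
      forall x y, S x -> S y -> S (addM x y)
    & forall r x, S x -> S (act r x)].

Definition sub_irreducible (R M : Type) (addM : M -> M -> M) (act : R -> M -> M) : Prop :=
  ~ quasitrivial act /\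
  forall S : M -> Prop, subsemimodule addM act S -> (exists x, ~ S x) ->
    forall r x, S x -> act r x = x.

Definition semimodule_congruence (R M : Type) (addM : M -> M -> M) (act : R -> M -> M)
    (rel : M -> M -> Prop) : Prop :=
  is_equivalence rel /\
  (forall x y z w, rel x y -> rel z w -> rel (addM x z) (addM y w)) /\
  (forall r x y, rel x y -> rel (act r x) (act r y)).

Definition quotient_irreducible (R M : Type) (addM : M -> M -> M) (act : R -> M -> M) : Prop :=
  ~ quasitrivial act /\
  forall rel, semimodule_congruence addM act rel ->
    (forall x y, rel x y <-> x = y) \/ (forall x y, rel x y).

Definition irreducible (R M : Type) (addM : M -> M -> M) (act : R -> M -> M) : Prop :=
  sub_irreducible addM act /\ quotient_irreducible addM act.

(* Main.v *)
Require Import Defs.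
From mathcomp Require Import all_boot.
From Stdlib Require Import Classical ClassicalEpsilon.
Set Implicit Arguments. Unset Strict Implicit. Unset Printing Implicit Defensive.

Definition asb (P : Prop) : bool := if excluded_middle_informative P then true else false.
Lemma asbP (P : Prop) : reflect P (asb P).
Proof. rewrite /asb; case: excluded_middle_informative => H; [exact: ReflectT | exact: ReflectF]. Qed.
Lemma asb_iff (P Q : Prop) : (P <-> Q) -> asb P = asb Q.
Proof. rewrite /asb => H; case: excluded_middle_informative => p; case: excluded_middle_informative => q //; exfalso; tauto. Qed.

Lemma card_lt (T : finType) (P : pred T) z : ~~ P z -> #|{: {x : T | P x}}| < #|T|.
Proof.
move=> Hz; rewrite card_sig -[X in _ < X](cardC [pred x | P x]) -{1}[#|_|]addn0 ltn_add2l.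
by apply/card_gt0P; exists z; rewrite !inE.
Qed.

Lemma ker_simple (R : Type) (add mul : R -> R -> R) (N : Type) (addN : N -> N -> N) (actN : R -> N -> N) :
  simple_semiring add mul -> is_semimodule add mul addN actN ->
  faithful actN \/ quasitrivial actN.
Proof.
move=> Hs [_ _ Hc Hd _].
have Hcong : semiring_congruence add mul (fun r s => forall x, actN r x = actN s x).
  split; first by split=> [x y|x y H z|x y z H1 H2 w]; [| by rewrite H| by rewrite H1 H2].
  move=> a b c d H1 H2; split=> x; first by rewrite !Hd H1 H2.
  by rewrite -!Hc H2 H1.
case: (Hs _ Hcong) => H; [left => r s Hrs; exact/(H r s).1 | right => r s x; exact: H].
Qed.

Lemma proj_card (R : finType) (add mul : R -> R -> R) :
  is_semiring add mul -> simple_semiring add mul ->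
  ((forall a b, mul a b = a) \/ (forall a b, mul a b = b)) -> #|R| <= 2.
Proof.
move=> [HA HC _ Hdl Hdr] Hs Hm.
have Hid : forall a, add a a = a.
  case: Hm => Hm a.
  - by have := Hdl a a a; rewrite !Hm => <-.
  - by have := Hdr a a a; rewrite !Hm => <-.
case: (classic (exists a x, add x a <> a)) => [[a [x0 Hx0]] | Hall].
  pose f := fun p => add p a == a.
  have Hle : forall p q, f (add p q) = f p && f q.
    move=> p q; rewrite /f.
    apply/eqP/andP => [H | [/eqP H1 /eqP H2]].
    + split; apply/eqP.
      * have -> : add p a = add p (add (add p q) a) by rewrite H.
        by rewrite !HA Hid H.
      * have -> : add q a = add q (add (add q p) a) by rewrite (HC q p) H.
        by rewrite !HA Hid (HC q p) H.
    + by rewrite -HA H2 H1.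
  have Hcong : semiring_congruence add mul (fun p q => f p = f q).
    split; first by split => [//|x y ->|x y z -> ->].
    move=> p q r s H1 H2; split; first by rewrite !Hle H1 H2.
    by case: Hm => Hm; rewrite !Hm.
  case: (Hs _ Hcong) => H.
  - have inj : injective f by move=> p q E; exact/(H p q).1.
    by have := leq_card _ inj; rewrite card_bool.
  - exfalso; apply: Hx0; apply/eqP; have := H x0 a; rewrite /f Hid eqxx => ->.
    by [].
have Hall' : forall a x, add x a = a.
  by move=> a x; apply: NNPP => H; apply: Hall; exists a, x.
have inj : injective (fun _ : R => tt).
  move=> p q _; have E1 := Hall' p q; have E2 := Hall' q p; rewrite HC in E2.
  exact: (etrans (esym E1) E2).
by have := leq_card _ inj; rewrite card_unit => /leq_trans; apply.
Qed.

Lemma no_const (R : finType) (add mul : R -> R -> R) : is_semiring add mul -> simple_semiring add mul ->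
  RR_nontrivial mul -> 2 < #|R| -> (forall t r s, mul t r = mul t s) -> False.
Proof.
move=> Hsr Hs [a [b [c [d Hne]]]] Hc Hk.
have [HA HC HM Hdl Hdr] := Hsr.
have Hh : forall t r, mul t r = mul t t by move=> t r; exact: Hk.
have Hcong : semiring_congruence add mul (fun p q => mul p p = mul q q).
  split; first by split => [//|x y ->|x y z -> ->].
  move=> p q r s H1 H2; split.
  - by rewrite Hdr (Hh p) (Hh r) Hdr (Hh q) (Hh s) H1 H2.
  - by rewrite -!HM (Hh p) (Hh q).
case: (Hs _ Hcong) => H.
- have Hl : forall t r, mul t r = t.
    move=> t r; rewrite Hh; apply/(H _ _).1.
    by rewrite -HM (Hh t).
  have := proj_card Hsr Hs (or_introl Hl).
  by rewrite leqNgt Hc.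
- apply: Hne; by rewrite Hh (Hh c) (H a c).
Qed.

Lemma no_rid (R : finType) (add mul : R -> R -> R) : is_semiring add mul -> simple_semiring add mul ->
  2 < #|R| -> (forall r s, mul r s = s) -> False.
Proof.
move=> Hsr Hs Hc Hk; have := proj_card Hsr Hs (or_intror Hk).
by rewrite leqNgt Hc.
Qed.

Definition subP (M : finType) (S : M -> Prop) : pred M := fun x => asb (S x).
Definition subT (M : finType) (S : M -> Prop) : finType := {x : M | subP S x}.
Lemma subP_in (M : finType) (S : M -> Prop) x : subP S x -> S x.
Proof. by move/asbP. Qed.
Lemma in_subP (M : finType) (S : M -> Prop) x : S x -> subP S x.
Proof. by move/asbP. Qed.

Definition subAdd (M : finType) (S : M -> Prop) (addM : M -> M -> M)
  (H : forall x y, S x -> S y -> S (addM x y)) (a b : subT S) : subT S :=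
  exist _ (addM (proj1_sig a) (proj1_sig b))
    (in_subP (H _ _ (subP_in (proj2_sig a)) (subP_in (proj2_sig b)))).
Definition subAct (R : Type) (M : finType) (S : M -> Prop) (act : R -> M -> M)
  (H : forall r x, S x -> S (act r x)) (r : R) (a : subT S) : subT S :=
  exist _ (act r (proj1_sig a)) (in_subP (H r _ (subP_in (proj2_sig a)))).

Lemma sub_semimodule (R : Type) (add mul : R -> R -> R) (M : finType) (addM : M -> M -> M)
  (act : R -> M -> M) (S : M -> Prop) (Ha : forall x y, S x -> S y -> S (addM x y))
  (Hr : forall r x, S x -> S (act r x)) :
  is_semimodule add mul addM act -> is_semimodule add mul (subAdd Ha) (subAct Hr).
Proof.
move=> [MA MC Mc Md Mr]; split=> *; apply: val_inj => /=;
  by rewrite ?MA ?Mc ?Md ?Mr // MC.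
Qed.

Lemma sub_qt (R : finType) (add mul : R -> R -> R) (M : finType) (addM : M -> M -> M)
  (act : R -> M -> M) :
  simple_semiring add mul -> is_semimodule add mul addM act ->
  faithful_smallest add mul addM act ->
  forall S, subsemimodule addM act S -> (exists x, ~ S x) ->
  forall r s x, S x -> act r x = act s x.
Proof.
move=> Hs Hm [Hf Hmin] S [_ Ha Hr] [z Hz].
have Hsm := sub_semimodule Ha Hr Hm.
case: (ker_simple Hs Hsm) => Hq.
- exfalso; have := Hmin _ _ _ Hsm Hq; rewrite leqNgt => /negP; apply.
  apply: (@card_lt M (subP S) z); apply/negP => /subP_in; exact: Hz.
- move=> r s x Sx; have := Hq r s (exist _ x (in_subP Sx)).
  by move/(f_equal (@proj1_sig _ _)).
Qed.

Definition rep (M : finType) (rel : M -> M -> Prop) (x : M) : M :=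
  odflt x [pick y | asb (rel x y)].

Lemma rep_rel (M : finType) (rel : M -> M -> Prop) : is_equivalence rel ->
  forall x, rel x (rep rel x).
Proof.
move=> [Hr _ _] x; rewrite /rep; case: pickP => [y /asbP //| H] /=; exact: Hr.
Qed.

Lemma rep_eq (M : finType) (rel : M -> M -> Prop) : is_equivalence rel ->
  forall x y, rel x y -> rep rel x = rep rel y.
Proof.
move=> [Hr Hsy Htr] x y Hxy; rewrite /rep.
have E : (fun z => asb (rel x z)) =1 (fun z => asb (rel y z)).
  move=> z; apply: asb_iff; split => H; [exact: Htr (Hsy _ _ Hxy) H | exact: Htr Hxy H].
rewrite (eq_pick E); case: pickP => [//|H]; exfalso.
have := H y; move/asbP: (Hr y) => -> //.
Qed.

Lemma rep_idem (M : finType) (rel : M -> M -> Prop) : is_equivalence rel ->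
  forall x, rep rel (rep rel x) = rep rel x.
Proof.
move=> He x; symmetry; apply: rep_eq => //; exact: rep_rel.
Qed.

Definition quoP (M : finType) (rel : M -> M -> Prop) : pred M := fun x => rep rel x == x.
Definition quoT (M : finType) (rel : M -> M -> Prop) : finType := {x : M | quoP rel x}.

Definition quoAdd (M : finType) (rel : M -> M -> Prop) (He : is_equivalence rel)
  (addM : M -> M -> M) (a b : quoT rel) : quoT rel :=
  exist _ (rep rel (addM (proj1_sig a) (proj1_sig b))) (introT eqP (rep_idem He _)).
Definition quoAct (R : Type) (M : finType) (rel : M -> M -> Prop) (He : is_equivalence rel)
  (act : R -> M -> M) (r : R) (a : quoT rel) : quoT rel :=
  exist _ (rep rel (act r (proj1_sig a))) (introT eqP (rep_idem He _)).

Lemma quo_semimodule (R : Type) (add mul : R -> R -> R) (M : finType) (addM : M -> M -> M)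
  (act : R -> M -> M) (rel : M -> M -> Prop) (He : is_equivalence rel) :
  (forall x y z w, rel x y -> rel z w -> rel (addM x z) (addM y w)) ->
  (forall r x y, rel x y -> rel (act r x) (act r y)) ->
  is_semimodule add mul addM act -> is_semimodule add mul (quoAdd He addM) (quoAct He act).
Proof.
move=> Hca Hcr [MA MC Mc Md Mr].
have [Hr Hsy Htr] := He.
have rr : forall x, rel (rep rel x) x by move=> x; apply: Hsy; exact: rep_rel.
have addr : forall x y, rep rel (addM x (rep rel y)) = rep rel (addM x y).
  by move=> x y; apply: rep_eq => //; apply: Hca.
have addl : forall x y, rep rel (addM (rep rel x) y) = rep rel (addM x y).
  by move=> x y; apply: rep_eq => //; apply: Hca.
have actr : forall r x, rep rel (act r (rep rel x)) = rep rel (act r x).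
  by move=> r x; apply: rep_eq => //; apply: Hcr.
split=> *; apply: val_inj => /=.
- by rewrite addr addl MA.
- by rewrite MC.
- by rewrite actr Mc.
- by rewrite addr addl Md.
- by rewrite actr addr addl Mr.
Qed.

Lemma quo_qt (R : finType) (add mul : R -> R -> R) (M : finType) (addM : M -> M -> M)
  (act : R -> M -> M) :
  simple_semiring add mul -> is_semimodule add mul addM act ->
  faithful_smallest add mul addM act ->
  forall rel, semimodule_congruence addM act rel -> ~ (forall x y, rel x y <-> x = y) ->
  forall r s x, rel (act r x) (act s x).
Proof.
move=> Hs Hm [Hf Hmin] rel [He [Hca Hcr]] Hnid.
have [Hr Hsy Htr] := He.
have [x [y [Hxy Hne]]] : exists x y, rel x y /\ x <> y.
  apply: NNPP => Hn; apply: Hnid => x y; split => [H|->]; last exact: Hr.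
  apply: NNPP => Hne; apply: Hn; by exists x, y.
have Hsm := quo_semimodule He Hca Hcr Hm.
case: (ker_simple Hs Hsm) => Hq.
- exfalso; have := Hmin _ _ _ Hsm Hq; rewrite leqNgt => /negP; apply.
  case E: (rep rel x == x).
  + apply: (@card_lt M (quoP rel) y); apply/negP => /eqP Ey; apply: Hne.
    by rewrite -(eqP E) -Ey; apply: rep_eq.
  + by apply: (@card_lt M (quoP rel) x); rewrite /quoP E.
- move=> r s z; have := Hq r s (exist _ (rep rel z) (introT eqP (rep_idem He _))).
  move/(f_equal (@proj1_sig _ _)) => /=.
  have actr : forall r x, rep rel (act r (rep rel x)) = rep rel (act r x).
    by move=> r' x'; apply: rep_eq => //; apply: Hcr; apply: Hsy; exact: rep_rel.
  rewrite !actr => E.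
  apply: Htr (rep_rel He _) _; rewrite E; apply: Hsy; exact: rep_rel.
Qed.

Theorem proposition2p14 (R : finType) (add mul : R -> R -> R)
    (M : finType) (addM : M -> M -> M) (act : R -> M -> M) :
  is_semiring add mul -> simple_semiring add mul ->
  RR_nontrivial mul -> 2 < #|R| ->
  is_semimodule add mul addM act ->
  faithful_smallest add mul addM act ->
  irreducible addM act.
Proof.
move=> Hsr Hs HRR Hc Hm Hfs.
have [Hf Hmin] := Hfs.
have [MA MC Mc Md Mr] := Hm.
have HnotQT : ~ quasitrivial act.
  move=> Hq; have inj : injective (fun _ : R => tt).
    by move=> p q _; apply: Hf => x; apply: Hq.
  by have := leq_card _ inj; rewrite card_unit leqNgt (leq_trans _ Hc).
have Hstar : forall a b, (forall t, act t a = act t b) -> a = b.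
  pose rel0 := fun a b => forall t, act t a = act t b.
  have Hcg : semimodule_congruence addM act rel0.
    split; first by split=> [x t|x y H t|x y z H1 H2 t]; [| rewrite H | rewrite H1 H2].
    split; first by move=> x y z w H1 H2 t; rewrite Mr H1 H2 -Mr.
    by move=> r x y H t; rewrite !Mc H.
  case: (classic (forall x y, rel0 x y <-> x = y)) => [H a b /H //| Hn].
  have Hq := quo_qt Hs Hm Hfs Hcg Hn.
  exfalso; apply: (no_const Hsr Hs HRR Hc) => t r s; apply: Hf => x.
  by rewrite -!Mc; apply: Hq.
have G1 : forall S, subsemimodule addM act S -> (exists x, ~ S x) ->
    forall r x, S x -> act r x = x.
  move=> S HS Hp r x Sx; have Hq := sub_qt Hs Hm Hfs HS Hp.
  apply: Hstar => t; rewrite Mc; exact: Hq.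
split; first by split.
split => // rel Hcg.
case: (classic (forall x y, rel x y <-> x = y)) => Hid; [by left | right].
have Hq := quo_qt Hs Hm Hfs Hcg Hid.
have /card_gt0P [r0 _] : 0 < #|R| by apply: leq_trans Hc.
have [[Hr Hsy Htr] [Hca Hcr]] := Hcg.
have Hfix : forall x r, rel (act r x) x.
  pose S := fun x => forall r, rel (act r x) x.
  case: (classic (forall x, S x)) => [//|HnS]; exfalso.
  have Sact : forall s x, S (act s x) by move=> s x r; rewrite Mc; exact: Hq.
  have [x0 _] := not_all_ex_not _ _ HnS.
  have HSs : subsemimodule addM act S.
    split; first by exists (act r0 x0).
    - by move=> x y Sx Sy r; rewrite Mr; apply: Hca.
    - by move=> r x _; apply: Sact.
  have Hfx := G1 S HSs (not_all_ex_not _ _ HnS).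
  apply: (no_rid Hsr Hs Hc) => r s; apply: Hf => x.
  by rewrite -Mc; apply: Hfx; apply: Sact.
have Hxx : forall x, rel (addM x x) x.
  move=> x; apply: Htr (Hfix x (add r0 r0)); rewrite Md.
  apply: Hsy; apply: Hca; exact: Hfix.
move=> x y; apply: NNPP => Hxy; apply: HnotQT => r s z.
have Hfz : forall r, act r z = z.
  move=> r'; apply: (G1 (rel z)) => //.
  - split; first by exists z.
    + move=> a b Ha Hb; apply: (Htr _ _ _ (Hsy _ _ (Hxx z))); exact: Hca.
    + move=> r1 a Ha; apply: (Htr _ _ _ Ha); apply: Hsy; exact: Hfix.
  - apply: NNPP => Hn; apply: Hxy.
    have Hall : forall w, rel z w by move=> w; apply: NNPP => Hw; apply: Hn; exists w.
    exact: (Htr _ _ _ (Hsy _ _ (Hall x)) (Hall y)).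
by rewrite !Hfz.
Qed.
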